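(* Let $p(x,y)=\sum_{i=1}^s a_i x^{\alpha_i}y^{\beta_i}\not\equiv 0$ be a real polynomial with $a_i\neq 0$, distinct exponent vectors $(\alpha_i,\beta_i)\in(\mathbb{N}\cup\{0\})^2$, and $p(0,0)=0$, and suppose there are $A=(A_1,A_2)\in\mathbb{Z}^2$ and $B\in\mathbb{Z}$ with $A_1\alpha_i+A_2\beta_i=B$ for all $i$, where one of the following holds: (a) $A_1>0$, $A_2<0$; (b) $A_1=0$, $A_2>0$; (c) $A_1>0$, $A_2=0$. In cases (a) and (b) index the terms so that $\alpha_1<\alpha_2<\dots<\alpha_s$; in case (c) index them so that $\beta_1<\beta_2<\dots<\beta_s$. Then $(0,0)$ is a point of local minimum of $p$ if and only if $a_1>0$ and $\alpha_1,\beta_1$ are even nonnegative integers.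
   Context: A point of local minimum of $p$ at $(0,0)$ means $p(x,y)\ge p(0,0)$ for all $(x,y)$ in some neighborhood of $(0,0)$. *)

(* Defs.v *)
From Stdlib Require Import Reals ZArith Arith.
Open Scope R_scope.

(* p(x,y) = sum_{i < s} a_i x^{alpha_i} y^{beta_i}  (terms indexed 0..s-1;
   the paper's term number k is our index k-1). *)
Fixpoint poly2 (s : nat) (a : nat -> R) (alpha beta : nat -> nat) (x y : R) : R :=
  match s with
  | O => 0
  | S n => poly2 n a alpha beta x y + a n * x ^ (alpha n) * y ^ (beta n)
  end.

Definition local_min_at_origin (f : R -> R -> R) : Prop :=
  exists eps : R, 0 < eps /\
    forall x y : R, Rabs x < eps -> Rabs y < eps -> f 0 0 <= f x y.

(* Main.v *)
Require Import Defs.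
From Stdlib Require Import Reals ZArith Arith.
From Stdlib Require Import Lra Lia Psatz.
Open Scope R_scope.

Lemma powle1 (t : R) (n : nat) : 0 <= t <= 1 -> 0 <= t ^ n <= 1.
Proof. intros H; induction n; simpl; nra. Qed.

Lemma powlet (t : R) (n : nat) : 0 <= t <= 1 -> (1 <= n)%nat -> t ^ n <= t.
Proof.
  intros H Hn; destruct n; [lia|]; simpl.
  pose proof (powle1 t n H); nra.
Qed.

Lemma mono_bound (x y d : R) (m n : nat) :
  0 <= d <= 1 -> Rabs x <= d -> Rabs y <= d -> (1 <= m + n)%nat ->
  Rabs (x ^ m * y ^ n) <= d.
Proof.
  intros Hd Hx Hy Hmn.
  rewrite Rabs_mult, <- !RPow_abs.
  assert (Hx1 : 0 <= Rabs x <= 1) by (split; [apply Rabs_pos|lra]).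
  assert (Hy1 : 0 <= Rabs y <= 1) by (split; [apply Rabs_pos|lra]).
  pose proof (powle1 _ m Hx1); pose proof (powle1 _ n Hy1).
  destruct m.
  - pose proof (powlet _ n Hy1 ltac:(lia)). simpl. nra.
  - pose proof (powlet _ (S m) Hx1 ltac:(lia)). nra.
Qed.

Lemma absb z : - Rabs z <= z <= Rabs z.
Proof. unfold Rabs; destruct Rcase_abs; lra. Qed.

Section Gen.
Variables (a : nat -> R) (alpha beta : nat -> nat).

Fixpoint rest (n : nat) (x y : R) : R :=
  match n with
  | O => 0
  | S k => rest k x y + match k with
            | O => 0
            | _ => a k * (x ^ (alpha k - alpha 0) * y ^ (beta k - beta 0))
            end
  end.

Fixpoint sumabs (n : nat) : R :=
  match n with O => 0 | S k => sumabs k + Rabs (a k) end.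

Lemma sumabs_pos n : 0 <= sumabs n.
Proof. induction n; simpl; [lra|]. pose proof (Rabs_pos (a n)); lra. Qed.

Hypothesis Hexp : forall i, (0 < i)%nat ->
  (alpha 0 <= alpha i)%nat /\ (beta 0 <= beta i)%nat /\
  (alpha 0 < alpha i \/ beta 0 < beta i)%nat.

Lemma decomp n x y : (1 <= n)%nat ->
  poly2 n a alpha beta x y = x ^ alpha 0 * y ^ beta 0 * (a 0 + rest n x y).
Proof.
  induction n as [|k IH]; intros Hn; [lia|].
  destruct k as [|j].
  - simpl. ring.
  - change (poly2 (S (S j)) a alpha beta x y) with
      (poly2 (S j) a alpha beta x y + a (S j) * x ^ alpha (S j) * y ^ beta (S j)).
    change (rest (S (S j)) x y) with
      (rest (S j) x y + a (S j) * (x ^ (alpha (S j) - alpha 0) * y ^ (beta (S j) - beta 0))).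
    rewrite IH by lia.
    destruct (Hexp (S j) ltac:(lia)) as [H1 [H2 _]].
    replace (alpha (S j)) with (alpha 0 + (alpha (S j) - alpha 0))%nat at 1 by lia.
    replace (beta (S j)) with (beta 0 + (beta (S j) - beta 0))%nat at 1 by lia.
    rewrite !pow_add. ring.
Qed.

Lemma rest_bound n x y d : 0 <= d <= 1 -> Rabs x <= d -> Rabs y <= d ->
  Rabs (rest n x y) <= d * sumabs n.
Proof.
  intros Hd Hx Hy. induction n as [|k IH].
  - simpl. rewrite Rabs_R0. lra.
  - simpl sumabs. destruct k as [|j].
    + simpl. rewrite Rplus_0_r, Rabs_R0. pose proof (Rabs_pos (a 0)). nra.
    + simpl rest. fold (rest j x y).
      change (rest j x y + match j with O => 0 | S _ => a j * (x ^ (alpha j - alpha 0) * y ^ (beta j - beta 0)) end) with (rest (S j) x y).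
      eapply Rle_trans; [apply Rabs_triang|].
      rewrite Rabs_mult.
      destruct (Hexp (S j) ltac:(lia)) as [H1 [H2 H3]].
      pose proof (mono_bound x y d (alpha (S j) - alpha 0) (beta (S j) - beta 0) Hd Hx Hy ltac:(lia)).
      pose proof (Rabs_pos (a (S j))).
      nra.
Qed.

Lemma pow_even_nonneg x n : Nat.Even n -> 0 <= x ^ n.
Proof.
  intros [m ->]. rewrite pow_mult. apply pow_le. nra.
Qed.

Lemma general s : (0 < s)%nat -> a 0 <> 0 ->
  poly2 s a alpha beta 0 0 = 0 ->
  (local_min_at_origin (poly2 s a alpha beta) <->
     (0 < a 0%nat /\ Nat.Even (alpha 0%nat) /\ Nat.Even (beta 0%nat))).
Proof.
  intros Hs Ha0 H00.
  set (S := sumabs s).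
  assert (HS : 0 <= S) by apply sumabs_pos.
  pose proof (Rabs_pos_lt _ Ha0) as Hpa.
  set (d := Rmin 1 (Rabs (a 0) / (2 * (S + 1)))).
  assert (Hd0 : 0 < d).
  { unfold d. apply Rmin_glb_lt; [lra|]. apply Rdiv_lt_0_compat; lra. }
  assert (Hd1 : d <= 1) by apply Rmin_l.
  assert (HdS : d * S <= Rabs (a 0) / 2).
  { assert (d <= Rabs (a 0) / (2 * (S + 1))) by apply Rmin_r.
    assert (Rabs (a 0) / (2 * (S + 1)) * S <= Rabs (a 0) / 2).
    { unfold Rdiv. rewrite Rinv_mult.
      assert (0 < / (S+1)) by (apply Rinv_0_lt_compat; lra).
      assert (/ (S+1) * S <= 1).
      { apply (Rmult_le_reg_l (S+1)); [lra|]. field_simplify; lra. }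
      nra. }
    nra. }
  assert (Hr : forall x y, Rabs x <= d -> Rabs y <= d ->
            Rabs (rest s x y) <= Rabs (a 0) / 2).
  { intros x y Hx Hy. eapply Rle_trans; [apply (rest_bound s x y d)|]; auto; lra. }
  unfold local_min_at_origin. rewrite H00. split.
  - intros [eps [Heps Hmin]].
    set (t := Rmin eps d / 2).
    assert (0 < Rmin eps d) by (apply Rmin_glb_lt; lra).
    assert (Ht0 : 0 < t) by (unfold t; lra).
    assert (Htd : t <= d) by (unfold t; pose proof (Rmin_r eps d); lra).
    assert (Hte : t < eps) by (unfold t; pose proof (Rmin_l eps d); lra).
    assert (Hat : Rabs t <= d) by (rewrite Rabs_pos_eq; lra).
    assert (Hamt : Rabs (-t) <= d) by (rewrite Rabs_Ropp, Rabs_pos_eq; lra).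
    assert (Hlt : Rabs t < eps) by (rewrite Rabs_pos_eq; lra).
    assert (Hlmt : Rabs (-t) < eps) by (rewrite Rabs_Ropp, Rabs_pos_eq; lra).
    assert (Hpos : 0 < a 0).
    { pose proof (Hmin t t Hlt Hlt) as Hm. rewrite decomp in Hm by lia.
      pose proof (Hr t t Hat Hat) as Hb.
      assert (0 < t ^ alpha 0 * t ^ beta 0) by (apply Rmult_lt_0_compat; apply pow_lt; lra).
      destruct (Rlt_or_le 0 (a 0)) as [|Hn]; [auto|exfalso].
      assert (a 0 < 0) by (destruct Hn; [lra|congruence]).
      rewrite (Rabs_left (a 0)) in Hb by lra.
      pose proof (absb (rest s t t)).
      assert (a 0 + rest s t t < 0) by lra.
      assert (t ^ alpha 0 * t ^ beta 0 * (a 0 + rest s t t) < 0).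
      { apply Rmult_pos_neg; lra. } lra. }
    split; [exact Hpos|].
    rewrite Rabs_pos_eq in Hr by lra.
    assert (Hlow : forall x y, Rabs x <= d -> Rabs y <= d -> a 0 / 2 <= a 0 + rest s x y).
    { intros x y hx hy. pose proof (Hr x y hx hy). pose proof (absb (rest s x y)). lra. }
    split.
    + destruct (Nat.Even_or_Odd (alpha 0)) as [|[m Hm]]; [auto|exfalso].
      pose proof (Hmin (-t) t Hlmt Hlt) as Hm'. rewrite decomp in Hm' by lia.
      pose proof (Hlow (-t) t Hamt Hat).
      assert (Hneg : (-t)^(alpha 0) = - ((t^2)^m * t)).
      { rewrite Hm, pow_add, pow_mult. replace ((-t)^2) with (t^2) by ring. ring. }
      rewrite Hneg in Hm'.
      assert (0 < (t^2)^m) by (apply pow_lt; nra).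
      assert (0 < t ^ beta 0) by (apply pow_lt; lra).
      assert (0 < (t^2)^m * t * t ^ beta 0 * (a 0 + rest s (-t) t)).
      { apply Rmult_lt_0_compat; [|lra]. apply Rmult_lt_0_compat; [|lra]. apply Rmult_lt_0_compat; lra. }
      lra.
    + destruct (Nat.Even_or_Odd (beta 0)) as [|[m Hm]]; [auto|exfalso].
      pose proof (Hmin t (-t) Hlt Hlmt) as Hm'. rewrite decomp in Hm' by lia.
      pose proof (Hlow t (-t) Hat Hamt).
      assert (Hneg : (-t)^(beta 0) = - ((t^2)^m * t)).
      { rewrite Hm, pow_add, pow_mult. replace ((-t)^2) with (t^2) by ring. ring. }
      rewrite Hneg in Hm'.
      assert (0 < (t^2)^m) by (apply pow_lt; nra).
      assert (0 < t ^ alpha 0) by (apply pow_lt; lra).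
      assert (0 < (t^2)^m * t * t ^ alpha 0 * (a 0 + rest s t (-t))).
      { apply Rmult_lt_0_compat; [|lra]. apply Rmult_lt_0_compat; [|lra]. apply Rmult_lt_0_compat; lra. }
      lra.
  - intros [Hpos [Ea Eb]]. exists d. split; [exact Hd0|].
    intros x y Hx Hy. rewrite decomp by lia.
    pose proof (Hr x y ltac:(lra) ltac:(lra)) as Hb.
    rewrite (Rabs_pos_eq (a 0)) in Hb by lra.
    pose proof (absb (rest s x y)).
    pose proof (pow_even_nonneg x _ Ea). pose proof (pow_even_nonneg y _ Eb).
    apply Rmult_le_pos; [apply Rmult_le_pos; auto|lra].
Qed.

End Gen.

Theorem mainTheorem4 (s : nat) (a : nat -> R) (alpha beta : nat -> nat)
  (A1 A2 B : Z) :
  (0 < s)%nat ->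
  (forall i, (i < s)%nat -> a i <> 0) ->
  (forall i j, (i < s)%nat -> (j < s)%nat -> i <> j ->
     (alpha i, beta i) <> (alpha j, beta j)) ->
  poly2 s a alpha beta 0 0 = 0 ->
  (forall i, (i < s)%nat ->
     (A1 * Z.of_nat (alpha i) + A2 * Z.of_nat (beta i))%Z = B) ->
  (((0 < A1)%Z /\ (A2 < 0)%Z) \/ (A1 = 0%Z /\ (0 < A2)%Z)
     \/ ((0 < A1)%Z /\ A2 = 0%Z)) ->
  ((((0 < A1)%Z /\ (A2 < 0)%Z) \/ (A1 = 0%Z /\ (0 < A2)%Z)) ->
     forall i j, (i < j)%nat -> (j < s)%nat -> (alpha i < alpha j)%nat) ->
  (((0 < A1)%Z /\ A2 = 0%Z) ->
     forall i j, (i < j)%nat -> (j < s)%nat -> (beta i < beta j)%nat) ->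
  (local_min_at_origin (poly2 s a alpha beta) <->
     (0 < a 0%nat /\ Nat.Even (alpha 0%nat) /\ Nat.Even (beta 0%nat))).
Proof.
  intros Hs Ha Hdist H00 Hlin Hcase Hsa Hsb.
  (* restrict to indices < s: redefine exponents outside range *)
  set (al := fun i => if Nat.ltb i s then alpha i else S (alpha 0%nat)).
  set (be := fun i => if Nat.ltb i s then beta i else S (beta 0%nat)).
  assert (Hp : forall x y, poly2 s a alpha beta x y = poly2 s a al be x y).
  { intros x y. assert (forall n, (n <= s)%nat -> poly2 n a alpha beta x y = poly2 n a al be x y).
    { induction n; intros Hn; simpl; [reflexivity|].
      unfold al, be. destruct (Nat.ltb_spec n s); [|lia]. rewrite IHn by lia. reflexivity. }
    auto. }
  assert (Hlm : local_min_at_origin (poly2 s a alpha beta) <-> local_min_at_origin (poly2 s a al be)).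
  { unfold local_min_at_origin. split; intros [e [He Hm]]; exists e; split; auto;
    intros x y Hx Hy; specialize (Hm x y Hx Hy); [rewrite <- !Hp; exact Hm | rewrite !Hp; exact Hm]. }
  assert (E0 : al 0%nat = alpha 0%nat /\ be 0%nat = beta 0%nat).
  { unfold al, be. destruct (Nat.ltb_spec 0 s); [auto|lia]. }
  destruct E0 as [E1 E2].
  rewrite Hlm, <- E1, <- E2. rewrite Hp in H00.
  apply general; auto.
  intros i Hi. unfold al, be. destruct (Nat.ltb_spec 0 s); [|lia].
  destruct (Nat.ltb_spec i s); [|lia].
  pose proof (Hlin i ltac:(lia)) as L1. pose proof (Hlin 0%nat ltac:(lia)) as L0.
  destruct Hcase as [[C1 C2]|[[C1 C2]|[C1 C2]]].
  - pose proof (Hsa (or_introl (conj C1 C2)) 0%nat i Hi ltac:(lia)). nia.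
  - pose proof (Hsa (or_intror (conj C1 C2)) 0%nat i Hi ltac:(lia)). subst. nia.
  - pose proof (Hsb (conj C1 C2) 0%nat i Hi ltac:(lia)). subst. nia.
Qed.
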